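(* Let $p,N\in\mathbb{N}$, $x_0<\cdots<x_N$, data $y_{n,2k}\in\mathbb{R}$ ($n=0,\dots,N$, $k=0,\dots,p$), and for $n=1,\dots,N$ and $\alpha_n\in\mathbb{R}$ let $$q_n(\alpha_n,x)=\sum_{l=0}^p\Big[\big(a_n^{2l}y_{n-1,2l}-\alpha_n y_{0,2l}\big)\Lambda_l\Big(\tfrac{x_N-x}{x_N-x_0}\Big)+\big(a_n^{2l}y_{n,2l}-\alpha_n y_{N,2l}\big)\Lambda_l\Big(\tfrac{x-x_0}{x_N-x_0}\Big)\Big](x_N-x_0)^{2l}.$$ Then for every $k=0,1,\dots,p$ and every $x\in[x_0,x_N]$, $$\left|\frac{\partial^{2k+1}}{\partial\alpha_n\,\partial x^{2k}}q_n(\alpha_n,x)\right|\le\frac{2\rho\pi}{3}\sum_{l=0}^{p-k}\Big(\frac{x_N-x_0}{\pi}\Big)^{2l}.$$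
   Context: Lidstone polynomials $\Lambda_l$ are defined by $\Lambda_0(x)=x$, $\Lambda_l''=\Lambda_{l-1}$, $\Lambda_l(0)=\Lambda_l(1)=0$ for $l\ge1$. $a_n=\frac{x_n-x_{n-1}}{x_N-x_0}$. $\rho=\max_{0\le k\le p}\max\{|y_{0,2k}|,|y_{N,2k}|\}$. *)

(* Defs.v *)
From Stdlib Require Import Reals Lra Lia.
Open Scope R_scope.

(* Lidstone polynomials, characterized by their defining properties:
   Lam 0 t = t, and for l >= 1: Lam l is twice differentiable with
   (Lam l)'' = Lam (l-1), Lam l 0 = Lam l 1 = 0.  These determine Lam uniquely. *)
Definition Lidstone (Lam : nat -> R -> R) : Prop :=
  (forall t, Lam 0%nat t = t) /\
  forall l : nat, (1 <= l)%nat ->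
    Lam l 0 = 0 /\ Lam l 1 = 0 /\
    exists d : R -> R, forall t,
      derivable_pt_lim (Lam l) t (d t) /\ derivable_pt_lim d t (Lam (l - 1)%nat t).

Inductive nth_deriv : nat -> (R -> R) -> (R -> R) -> Prop :=
| nth_deriv_0 : forall f, nth_deriv 0 f f
| nth_deriv_S : forall n f g h,
    nth_deriv n f g -> (forall x, derivable_pt_lim g x (h x)) ->
    nth_deriv (S n) f h.

Definition a_coef (xs : nat -> R) (N n : nat) : R :=
  (xs n - xs (n - 1)%nat) / (xs N - xs 0%nat).

(* y n k stands for the datum y_{n,2k}. *)
Definition q_fun (Lam : nat -> R -> R) (xs : nat -> R) (y : nat -> nat -> R)
  (N p n : nat) (alpha x : R) : R :=
  let L := xs N - xs 0%nat in
  let a := a_coef xs N n in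
  sum_f_R0 (fun l =>
    ((a ^ (2 * l) * y (n - 1)%nat l - alpha * y 0%nat l) * Lam l ((xs N - x) / L)
     + (a ^ (2 * l) * y n l - alpha * y N l) * Lam l ((x - xs 0%nat) / L))
    * L ^ (2 * l)) p.

Fixpoint rho_upto (y : nat -> nat -> R) (N k : nat) : R :=
  match k with
  | O => Rmax (Rabs (y 0%nat 0%nat)) (Rabs (y N 0%nat))
  | S k' => Rmax (rho_upto y N k') (Rmax (Rabs (y 0%nat k)) (Rabs (y N k)))
  end.

(* Main.v *)
Require Import Defs.
From Stdlib Require Import Reals Lra Lia Psatz FunctionalExtensionality IndefiniteDescription.
From Coquelicot Require Import Coquelicot.
Open Scope R_scope.

Lemma dl_minus f g x a b : derivable_pt_lim f x a -> derivable_pt_lim g x b -> derivable_pt_lim (fun t => f t - g t) x (a-b).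
Proof. intros; apply (derivable_pt_lim_minus f g); auto. Qed.
Lemma dl_plus f g x a b : derivable_pt_lim f x a -> derivable_pt_lim g x b -> derivable_pt_lim (fun t => f t + g t) x (a+b).
Proof. intros; apply (derivable_pt_lim_plus f g); auto. Qed.
Lemma dl_mult f g x a b : derivable_pt_lim f x a -> derivable_pt_lim g x b -> derivable_pt_lim (fun t => f t * g t) x (a * g x + f x * b).
Proof. intros. apply (derivable_pt_lim_mult f g); auto. Qed.
Lemma dl_comp f g x a b : derivable_pt_lim g x a -> derivable_pt_lim f (g x) b -> derivable_pt_lim (fun t => f (g t)) x (b * a).
Proof. intros. apply (derivable_pt_lim_comp g f); auto. Qed.
Lemma dl_ext_val f x a b : derivable_pt_lim f x a -> a = b -> derivable_pt_lim f x b.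
Proof. intros H ->; exact H. Qed.
Lemma dl_scal_l f x a c : derivable_pt_lim f x a -> derivable_pt_lim (fun t => c * f t) x (c * a).
Proof. intros. apply (derivable_pt_lim_scal f c); auto. Qed.
Lemma dl_scal_r f x a c : derivable_pt_lim f x a -> derivable_pt_lim (fun t => f t * c) x (a * c).
Proof. intros H.
  replace (fun t => f t * c) with (fun t => c * f t) by (apply functional_extensionality; intros; field).
  replace (a*c) with (c*a) by field. apply dl_scal_l; auto. Qed.

Lemma dl_sum (f f' : nat -> R -> R) p x :
  (forall l, derivable_pt_lim (f l) x (f' l x)) ->
  derivable_pt_lim (fun t => sum_f_R0 (fun l => f l t) p) x (sum_f_R0 (fun l => f' l x) p).
Proof.
  intros H. induction p as [|p IH]; simpl.
  - apply H.
  - apply dl_plus; auto.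
Qed.

Lemma term_deriv (F1 F2 dF1 dF2 u v : R -> R) du dv c1 c2 K x :
  (forall t, derivable_pt_lim F1 t (dF1 t)) -> (forall t, derivable_pt_lim F2 t (dF2 t)) ->
  derivable_pt_lim u x du -> derivable_pt_lim v x dv ->
  derivable_pt_lim (fun x => (c1 * F1 (u x) + c2 * F2 (v x)) * K) x
     ((c1 * (dF1 (u x) * du) + c2 * (dF2 (v x) * dv)) * K).
Proof.
  intros H1 H2 Hu Hv. apply dl_scal_r. apply dl_plus; apply dl_scal_l.
  - apply (dl_comp F1 u); auto.
  - apply (dl_comp F2 v); auto.
Qed.

Definition Pf (Lam : nat -> R -> R) (i l : nat) : R -> R :=
  if (i <=? l)%nat then Lam (l - i)%nat else fun _ => 0.

Lemma P_deriv Lam : Lidstone Lam -> forall i l, exists d : R -> R, forall t,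
  derivable_pt_lim (Pf Lam i l) t (d t) /\ derivable_pt_lim d t (Pf Lam (S i) l t).
Proof.
  intros [H0 H1] i l. unfold Pf.
  destruct (Nat.leb_spec i l) as [Hil|Hil]; destruct (Nat.leb_spec (S i) l) as [Hil'|Hil'].
  - destruct (H1 (l - i)%nat ltac:(lia)) as [_ [_ [d Hd]]]. exists d. intros t.
    replace (l - i - 1)%nat with (l - S i)%nat in Hd by lia. apply Hd.
  - assert (l = i) by lia. subst. rewrite Nat.sub_diag.
    exists (fun _ => 1). intros t. split.
    + replace (Lam 0%nat) with (fun t : R => t) by (apply functional_extensionality; intros; auto).
      apply derivable_pt_lim_id.
    + apply (derivable_pt_lim_const 1).
  - lia.
  - exists (fun _ => 0). intros t; split; apply (derivable_pt_lim_const 0).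
Qed.

Lemma shift_sum (g h : nat -> R) k M : (forall l, (l < k)%nat -> g l <= 0) ->
  (forall j, (j <= M)%nat -> g (k + j)%nat <= h j) -> sum_f_R0 g (k + M) <= sum_f_R0 h M.
Proof.
  intros Hg Hh. assert (forall m, (m <= M)%nat -> sum_f_R0 g (k + m) <= sum_f_R0 h m); [|auto].
  intros m. induction m as [|m IH]; intros Hm.
  - rewrite Nat.add_0_r. simpl.
    assert (A: forall k', (k' <= k)%nat -> sum_f_R0 g k' <= g k').
    { induction k' as [|k' IHk]; intros Hk; simpl; [lra|].
      specialize (IHk ltac:(lia)). pose proof (Hg k' ltac:(lia)). lra. }
    specialize (Hh 0%nat ltac:(lia)). rewrite Nat.add_0_r in Hh. specialize (A k (le_n k)). lra.
  - replace (k + S m)%nat with (S (k + m)) by lia. simpl.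
    specialize (Hh (S m) Hm). replace (k + S m)%nat with (S (k + m)) in Hh by lia.
    specialize (IH ltac:(lia)). lra.
Qed.

Lemma rho_ge y N : forall p l, (l <= p)%nat ->
  Rabs (y 0%nat l) <= rho_upto y N p /\ Rabs (y N l) <= rho_upto y N p.
Proof.
  induction p as [|p IH]; intros l Hl; simpl.
  - assert (l = 0%nat) by lia. subst. split; [apply Rmax_l|apply Rmax_r].
  - destruct (Nat.eq_dec l (S p)) as [->|Hne].
    + pose proof (Rmax_l (Rabs (y 0%nat (S p))) (Rabs (y N (S p)))).
      pose proof (Rmax_r (Rabs (y 0%nat (S p))) (Rabs (y N (S p)))).
      pose proof (Rmax_r (rho_upto y N p) (Rmax (Rabs (y 0%nat (S p))) (Rabs (y N (S p))))).
      split; lra.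
    + destruct (IH l ltac:(lia)).
      pose proof (Rmax_l (rho_upto y N p) (Rmax (Rabs (y 0%nat (S p))) (Rabs (y N (S p))))).
      split; lra.
Qed.

Lemma xs_mono xs N : (forall i : nat, (i < N)%nat -> xs i < xs (S i)) ->
  forall i, (1 <= i <= N)%nat -> xs 0%nat < xs i.
Proof.
  intros H i. induction i as [|i IH]; intros Hi; [lia|].
  destruct i as [|i]. - apply H; lia. - specialize (IH ltac:(lia)). specialize (H (S i) ltac:(lia)). lra.
Qed.
Lemma max_principle (w dw ddw : R -> R) :
  (forall t, derivable_pt_lim w t (dw t)) ->
  (forall t, derivable_pt_lim dw t (ddw t)) ->
  (forall t, 0 <= t <= 1 -> ddw t <= 0) -> 0 <= w 0 -> 0 <= w 1 ->
  forall t, 0 <= t <= 1 -> 0 <= w t.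
Proof.
  intros Hw Hdw Hdd H0 H1 t Ht.
  destruct (Req_dec t 0) as [->|Ht0]; [lra|].
  destruct (Req_dec t 1) as [->|Ht1]; [lra|].
  destruct (MVT_cor2 w dw 0 t) as [c1 [E1 Hc1]]; [lra|intros; apply Hw|].
  destruct (MVT_cor2 w dw t 1) as [c2 [E2 Hc2]]; [lra|intros; apply Hw|].
  destruct (MVT_cor2 dw ddw c1 c2) as [c3 [E3 Hc3]]; [lra|intros; apply Hdw|].
  assert (ddw c3 <= 0) by (apply Hdd; lra).
  assert (dw c2 <= dw c1) by nra.
  assert (0 <= t * (1 - t) * (dw c1 - dw c2)).
  { apply Rmult_le_pos; [nra|lra]. }
  nra.
Qed.
Lemma PI_ub : PI <= 52/15.
Proof.
  destruct (PI_ineq 1) as [_ H]. simpl in H. unfold tg_alt, PI_tg in H. simpl in H. lra.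
Qed.
Lemma PI_lb : 3 <= PI.
Proof. pose proof PI2_3_2. lra. Qed.

Lemma sin_cubic a : 0 <= a <= PI -> a - a^3/6 <= sin a.
Proof.
  intros Ha. destruct (SIN a) as [H _]; try lra.
  unfold sin_lb, sin_approx, sin_term in H. simpl in H.
  pose proof PI_ub.
  assert (a*a <= 16) by nra.
  assert (0 <= a^5/120 - a^7/5040).
  { replace (a^5/120 - a^7/5040) with (a^5 * (42 - a*a)/5040) by field.
    apply Rmult_le_pos; [apply Rmult_le_pos|lra]; [apply pow_le; lra|lra]. }
  lra.
Qed.

Lemma poly_sin t : 0 <= t <= 1 -> t * (1 - t^2) / 6 <= / (3*PI) * sin (PI*t).
Proof.
  intros Ht. pose proof PI_ub. pose proof PI_lb.
  assert (PI*PI <= 13) by nra.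
  assert (Hk: PI * t * (1 - t^2) <= 2 * sin (PI*t)).
  { destruct (Rle_lt_dec t (9/20)).
    - pose proof (sin_cubic (PI*t)) as S. 
      assert (0 <= PI*t <= PI) by nra.
      assert (t*t*(PI*PI/3 - 1) <= 1) by nra.
      assert (0 <= PI*t*(1 - t*t*(PI*PI/3-1))).
      { apply Rmult_le_pos; nra. }
      assert (PI*t - (PI*t)^3/6 <= sin (PI*t)) by (apply S; lra).
      nra.
    - set (u := 1 - t).
      assert (E: sin (PI*t) = sin (PI*u)) by (unfold u; rewrite <- sin_PI_x; f_equal; ring).
      rewrite E.
      assert (0 <= PI*u <= PI) by (unfold u; nra).
      assert (PI*u - (PI*u)^3/6 <= sin (PI*u)) by (apply sin_cubic; lra).
      assert (u*(1+PI*PI/3) <= 3) by (unfold u; nra).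
      assert (0 <= PI*u*u*(3 - u*(1+PI*PI/3))).
      { apply Rmult_le_pos; [|lra]. unfold u; apply Rmult_le_pos; nra. }
      replace t with (1-u) by (unfold u; ring). nra. }
  apply (Rmult_le_reg_l (6*PI)); [lra|].
  replace (6 * PI * (t * (1 - t ^ 2) / 6)) with (PI * t * (1 - t^2)) by field.
  replace (6 * PI * (/ (3 * PI) * sin (PI * t))) with (2 * sin (PI*t)) by (field; lra).
  exact Hk.
Qed.
Lemma abs_inv x a : Rabs x <= a -> -a <= x <= a.
Proof. unfold Rabs; destruct (Rcase_abs x); lra. Qed.

Lemma lam1 Lam : Lidstone Lam -> forall t, 0 <= t <= 1 -> Lam 1%nat t = (t^3 - t)/6.
Proof.
  intros [H0 H1] t Ht. destruct (H1 1%nat (le_n 1)) as [L0 [L1 [d Hd]]].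
  assert (D1: forall x, derivable_pt_lim (fun t => (t^3 - t)/6) x ((3*x^2-1)/6)).
  { intros x; apply is_derive_Reals. auto_derive; auto. field. }
  assert (D2: forall x, derivable_pt_lim (fun t => (3*t^2-1)/6) x x).
  { intros x; apply is_derive_Reals. auto_derive; auto. field. }
  assert (A: forall s, derivable_pt_lim (fun t => Lam 1%nat t - (t^3 - t)/6) s (d s - (3*s^2-1)/6)).
  { intros s; apply dl_minus; [apply Hd|apply D1]. }
  assert (B: forall s, derivable_pt_lim (fun t => d t - (3*t^2-1)/6) s (Lam 0%nat s - s)).
  { intros s; apply dl_minus; [apply Hd|apply D2]. }
  pose proof (max_principle _ _ _ A B) as M1.
  assert (A': forall s, derivable_pt_lim (fun t => -(Lam 1%nat t - (t^3 - t)/6)) s (-(d s - (3*s^2-1)/6))).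
  { intros s; apply (derivable_pt_lim_opp (fun t => Lam 1%nat t - (t^3 - t)/6)). apply A. }
  assert (B': forall s, derivable_pt_lim (fun t => -(d t - (3*t^2-1)/6)) s (-(Lam 0%nat s - s))).
  { intros s; apply (derivable_pt_lim_opp (fun t => d t - (3*t^2-1)/6)). apply B. }
  pose proof (max_principle _ _ _ A' B') as M2.
  assert (Z: forall s, 0 <= s <= 1 -> Lam 0%nat s - s <= 0) by (intros s _; rewrite H0; lra).
  assert (Z': forall s, 0 <= s <= 1 -> -(Lam 0%nat s - s) <= 0) by (intros s _; rewrite H0; lra).
  specialize (M1 Z). specialize (M2 Z'). simpl in M1, M2.
  rewrite L0, L1 in M1, M2.
  assert (0 <= Lam 1%nat t - (t^3-t)/6) by (apply M1; lra).
  assert (0 <= -(Lam 1%nat t - (t^3-t)/6)) by (apply M2; lra).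
  lra.
Qed.

Lemma lam_sin Lam : Lidstone Lam -> forall m t, 0 <= t <= 1 ->
  Rabs (Lam (S m) t) <= / (3*PI) * (/PI)^(2*m) * sin (PI*t).
Proof.
  intros HL m. induction m as [|m IH]; intros t Ht.
  - rewrite (lam1 Lam HL t Ht). simpl pow. rewrite Rmult_1_r.
    rewrite Rabs_left1.
    + pose proof (poly_sin t Ht). replace (- ((t^3-t)/6)) with (t*(1-t^2)/6) by field. lra.
    + assert (0 <= t*(1-t^2)) by (apply Rmult_le_pos; nra). nra.
  - destruct HL as [H0 H1].
    destruct (H1 (S (S m)) ltac:(lia)) as [L0 [L1 [d Hd]]].
    simpl (S (S m) - 1)%nat in Hd.
    set (C := / (3*PI) * (/PI)^(2*m)).
    set (K := C / (PI*PI)).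
    pose proof PI_RGT_0.
    assert (KC: K * PI * PI = C) by (unfold K; field; lra).
    assert (S1: forall x, derivable_pt_lim (fun t => K * sin (PI*t)) x (K*PI*cos (PI*x))).
    { intros x; apply is_derive_Reals. auto_derive; auto. field. }
    assert (S2: forall x, derivable_pt_lim (fun t => K*PI*cos (PI*t)) x (- C * sin (PI*x))).
    { intros x; apply is_derive_Reals. auto_derive; auto. rewrite <- KC. field. }
    assert (E: / (3 * PI) * (/ PI) ^ (2 * S m) = K).
    { unfold K, C. replace (2 * S m)%nat with (S (S (2*m))) by lia. simpl pow. field. lra. }
    rewrite E.
    assert (s0: sin (PI*0) = 0) by (rewrite Rmult_0_r; apply sin_0).
    assert (s1: sin (PI*1) = 0) by (rewrite Rmult_1_r; apply sin_PI).
    assert (M1: 0 <= K * sin (PI*t) - Lam (S (S m)) t).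
    { apply (max_principle (fun t => K * sin (PI*t) - Lam (S (S m)) t)
              (fun t => K*PI*cos (PI*t) - d t) (fun t => - C * sin (PI*t) - Lam (S m) t)).
      - intros s; apply dl_minus; [apply S1|apply Hd].
      - intros s; apply dl_minus; [apply S2|apply Hd].
      - intros s Hs. pose proof (IH s Hs) as Hi. apply abs_inv in Hi. unfold C in *. lra.
      - rewrite s0, L0; lra.
      - rewrite s1, L1; lra.
      - exact Ht. }
    assert (M2: 0 <= K * sin (PI*t) + Lam (S (S m)) t).
    { apply (max_principle (fun t => K * sin (PI*t) + Lam (S (S m)) t)
              (fun t => K*PI*cos (PI*t) + d t) (fun t => - C * sin (PI*t) + Lam (S m) t)).
      - intros s; apply dl_plus; [apply S1|apply Hd].
      - intros s; apply dl_plus; [apply S2|apply Hd].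
      - intros s Hs. pose proof (IH s Hs) as Hi. apply abs_inv in Hi. unfold C in *. lra.
      - rewrite s0, L0; lra.
      - rewrite s1, L1; lra.
      - exact Ht. }
    apply Rabs_le; lra.
Qed.

Lemma lam_bound Lam : Lidstone Lam -> forall j t, 0 <= t <= 1 ->
  Rabs (Lam j t) <= PI/3 * (/PI)^(2*j).
Proof.
  intros HL j t Ht. pose proof PI_RGT_0. assert (3 <= PI) by (pose proof PI2_3_2; lra).
  destruct j as [|m].
  - destruct HL as [HL0 _]. rewrite HL0. simpl. rewrite Rabs_right by lra. lra.
  - eapply Rle_trans; [apply (lam_sin Lam HL m t Ht)|].
    assert (0 <= / (3*PI) * (/PI)^(2*m)).
    { apply Rmult_le_pos; [left; apply Rinv_0_lt_compat; lra|apply pow_le; left; apply Rinv_0_lt_compat; lra]. }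
    replace (PI / 3 * (/ PI) ^ (2 * S m)) with (/ (3*PI) * (/PI)^(2*m) * 1).
    2: { replace (2 * S m)%nat with (2*m + 2)%nat by lia. rewrite pow_add. simpl (_ ^ 2). field. lra. }
    apply Rmult_le_compat_l; [lra|apply SIN_bound].
Qed.

Ltac dsum := match goal with
  |- derivable_pt_lim (fun x => sum_f_R0 (fun l => @?F l x) ?p) ?x0 (sum_f_R0 (fun l => @?F' l) ?p) =>
    apply (dl_sum F (fun l _ => F' l) p x0) end.

Theorem proposition4p1 (p N : nat) (xs : nat -> R) (y : nat -> nat -> R)
  (Lam : nat -> R -> R) (n : nat) :
  Lidstone Lam ->
  (forall i : nat, (i < N)%nat -> xs i < xs (S i)) ->
  (1 <= n <= N)%nat ->
  forall k : nat, (k <= p)%nat ->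
  exists G D : R -> R -> R,
    (forall alpha, nth_deriv (2 * k) (fun x => q_fun Lam xs y N p n alpha x) (G alpha)) /\
    (forall alpha x, derivable_pt_lim (fun b => G b x) alpha (D alpha x)) /\
    (forall alpha x, xs 0%nat <= x <= xs N ->
       Rabs (D alpha x) <=
       2 * rho_upto y N p * PI / 3 *
       sum_f_R0 (fun l => ((xs N - xs 0%nat) / PI) ^ (2 * l)) (p - k)).
Proof.
  intros HL Hinc Hn k Hk.
  set (L := xs N - xs 0%nat).
  assert (HL0 : 0 < L) by (unfold L; pose proof (xs_mono xs N Hinc N ltac:(lia)); lra).
  set (a := a_coef xs N n).
  set (dP := fun i l => proj1_sig (constructive_indefinite_description _ (P_deriv Lam HL i l))).
  assert (HdP : forall i l t, derivable_pt_lim (Pf Lam i l) t (dP i l t) /\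
                              derivable_pt_lim (dP i l) t (Pf Lam (S i) l t)).
  { intros i l t. unfold dP. apply (proj2_sig (constructive_indefinite_description _ (P_deriv Lam HL i l))). }
  set (u := fun x => (xs N - x) / L).
  set (v := fun x => (x - xs 0%nat) / L).
  assert (du : forall x, derivable_pt_lim u x (- / L)).
  { intros x; unfold u; apply is_derive_Reals. auto_derive; auto. field. lra. }
  assert (dv : forall x, derivable_pt_lim v x (/ L)).
  { intros x; unfold v; apply is_derive_Reals. auto_derive; auto. field. lra. }
  set (Gi := fun i alpha x => sum_f_R0 (fun l =>
     ((a^(2*l) * y (n-1)%nat l - alpha * y 0%nat l) * Pf Lam i l (u x)
      + (a^(2*l) * y n l - alpha * y N l) * Pf Lam i l (v x)) * (L^(2*l) * (/L)^(2*i))) p).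
  set (Hi := fun i alpha x => sum_f_R0 (fun l =>
     ((a^(2*l) * y (n-1)%nat l - alpha * y 0%nat l) * (dP i l (u x) * (- / L))
      + (a^(2*l) * y n l - alpha * y N l) * (dP i l (v x) * (/ L))) * (L^(2*l) * (/L)^(2*i))) p).
  assert (dG : forall i alpha x, derivable_pt_lim (Gi i alpha) x (Hi i alpha x)).
  { intros i alpha x. unfold Gi, Hi. dsum. intros l.
    apply term_deriv; auto; intros t; apply HdP. }
  assert (dH : forall i alpha x, derivable_pt_lim (Hi i alpha) x (Gi (S i) alpha x)).
  { intros i alpha x.
    replace (Gi (S i) alpha x) with (sum_f_R0 (fun l =>
     ((a^(2*l) * y (n-1)%nat l - alpha * y 0%nat l) * (Pf Lam (S i) l (u x) * (- / L) * (- / L))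
      + (a^(2*l) * y n l - alpha * y N l) * (Pf Lam (S i) l (v x) * (/ L) * (/ L))) * (L^(2*l) * (/L)^(2*i))) p).
    - unfold Hi. dsum. intros l.
      apply (term_deriv (fun t => dP i l t * (- / L)) (fun t => dP i l t * (/ L))
             (fun t => Pf Lam (S i) l t * (- / L)) (fun t => Pf Lam (S i) l t * (/ L))); auto;
      intros t; apply dl_scal_r; apply HdP.
    - unfold Gi. apply sum_eq. intros l _.
      replace (2 * S i)%nat with (2 * i + 2)%nat by lia. rewrite pow_add. simpl (_ ^ 2).
      field. lra. }
  assert (Hq : forall alpha i, nth_deriv (2 * i) (fun x => q_fun Lam xs y N p n alpha x) (Gi i alpha)).
  { intros alpha i. induction i as [|i IH].
    - replace (Gi 0%nat alpha) with (fun x => q_fun Lam xs y N p n alpha x).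
      + constructor.
      + apply functional_extensionality; intros x. unfold Gi, q_fun. apply sum_eq. intros l _.
        unfold Pf. simpl (0 <=? l)%nat. rewrite Nat.sub_0_r. fold L. fold a. change ((/L)^(2*0)%nat) with 1. rewrite Rmult_1_r. reflexivity.
    - replace (2 * S i)%nat with (S (S (2 * i))) by lia.
      eapply nth_deriv_S; [eapply nth_deriv_S; [exact IH|]|]; intros x; [apply dG|apply dH]. }
  exists (Gi k).
  exists (fun alpha x => sum_f_R0 (fun l =>
     (- y 0%nat l * Pf Lam k l (u x) - y N l * Pf Lam k l (v x)) * (L^(2*l) * (/L)^(2*k))) p).
  split; [|split].
  - intros alpha; apply Hq.
  - intros alpha x. unfold Gi. dsum. intros l.
    apply is_derive_Reals. auto_derive; auto. change (2*l)%nat with (l+(l+0))%nat. change (2*k)%nat with (k+(k+0))%nat. field.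
  - intros alpha x Hx.
    assert (HiL : 0 < / L) by (apply Rinv_0_lt_compat; lra).
    assert (HLL : L * / L = 1) by (field; lra).
    assert (Hu : 0 <= u x <= 1) by (unfold u, Rdiv; fold L in Hx; unfold L in *; split; nra).
    assert (Hv : 0 <= v x <= 1) by (unfold v, Rdiv; fold L in Hx; unfold L in *; split; nra).
    set (rho := rho_upto y N p).
    assert (Hp: p = (k + (p - k))%nat) by lia.
    eapply Rle_trans; [apply sum_f_R0_triangle|].
    rewrite scal_sum. rewrite Hp at 1.
    apply shift_sum.
    + intros l Hl. unfold Pf. destruct (Nat.leb_spec k l); [lia|].
      rewrite !Rmult_0_r, Rminus_0_r, Rmult_0_l, Rabs_R0; lra.
    + intros j Hj. unfold Pf. destruct (Nat.leb_spec k (k + j)); [|lia].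
      replace (k + j - k)%nat with j by lia.
      assert (EK : L ^ (2 * (k + j)) * (/ L) ^ (2 * k) = L ^ (2 * j)).
      { replace (2 * (k + j))%nat with (2 * j + 2 * k)%nat by lia. rewrite pow_add, Rmult_assoc.
        rewrite <- Rpow_mult_distr, HLL, pow1. apply Rmult_1_r. }
      rewrite EK. unfold Rdiv at 1. rewrite Rpow_mult_distr.
      pose proof (pow_le L (2*j) ltac:(lra)) as HLj.
      rewrite Rabs_mult, (Rabs_right (L ^ (2*j))) by lra.
      destruct (rho_ge y N p (k + j) ltac:(lia)) as [R0 RN]. fold rho in R0, RN.
      pose proof (lam_bound Lam HL j (u x) Hu) as B1.
      pose proof (lam_bound Lam HL j (v x) Hv) as B2.
      set (B := PI / 3 * (/ PI) ^ (2 * j)) in *.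
      assert (Habs : Rabs (- y 0%nat (k + j)%nat * Lam j (u x) - y N (k + j)%nat * Lam j (v x)) <= 2 * rho * B).
      { unfold Rminus. eapply Rle_trans; [apply Rabs_triang|].
        rewrite Rabs_Ropp, !Rabs_mult, Rabs_Ropp.
        pose proof (Rabs_pos (y 0%nat (k+j)%nat)). pose proof (Rabs_pos (y N (k+j)%nat)).
        pose proof (Rabs_pos (Lam j (u x))). pose proof (Rabs_pos (Lam j (v x))).
        nra. }
      replace (L ^ (2 * j) * (/ PI) ^ (2 * j) * (2 * rho * PI / 3)) with (2 * rho * B * L ^ (2 * j))
        by (unfold B; field; pose proof PI_RGT_0; lra).
      apply Rmult_le_compat_r; lra.
Qed.
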